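(* Let $n=2m$, let $\Delta'$ be the simplicial complex on vertex set $\{(i,j):1\le i\le j\le n,\ i+j\ne n+1\}$ whose faces are the sets $F$ with $\prod_{(i,j)\in F}x_{ij}\notin K(2,n)$, where $K(2,n)$ is as in the context. Let $P$ be a facet of $\Delta'$, $P$ a facet of $\Delta_A$ with $A\in\mathcal A$, and let $x\in P$. Then there are exactly two facets of $\Delta'$ containing $P\setminus\{x\}$, namely $P$ and a facet $Q$ described as follows: (i) if $x$ is a turn (left or right) of $P$, then $Q$ is the unique facet of $\Delta_A$ other than $P$ containing $P\setminus\{x\}$ (the path obtained from $P$ by flipping $x$); (ii) if $x$ is isolated with index $i\in A$, then with $A'=(A\setminus\{i\})\cup\{n+1-i\}$, $P\setminus\{x\}$ is a face of $\Delta_{A'}$ contained in a unique facet $Q$ of $\Delta_{A'}$.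
   Context: $K(2,n)\subset K[x_{ij}:1\le i\le j\le n]$ is generated by the products $x_{ij}x_{hk}$ ($i\le j$, $h\le k$) not involving any $x_{a,n+1-a}$ and such that either $a+b=n+1$ for some $a\in\{i,j\}$, $b\in\{h,k\}$, or $i<h$ and $j<k$. $\mathcal A$ is the family of $m$-element subsets $A\subseteq[n]$ with $i+j\ne n+1$ for all $i,j\in A$. For $A=\{a_1<\dots<a_m\}\in\mathcal A$, $T_A=\{(i,j): i\le j,\ i,j\in A\}$ and $\Delta_A=\{F\in\Delta':F\subseteq T_A\}$. It is a fact (established in the paper) that the facets of $\Delta_A$ are exactly the paths in $T_A$ starting at $(a_1,a_m)$ and ending at some diagonal position $(a_i,a_i)$, each step going horizontally left ($(a_r,a_s)\to(a_r,a_{s-1})$) or vertically down ($(a_r,a_s)\to(a_{r+1},a_s)$), and that every facet of $\Delta'$ is a facet of $\Delta_A$ for exactly one $A$. Types of points of such a path $P$: an interior point is a left turn if the step into it is horizontal and the step out is vertical, a right turn if the step in is vertical and the step out horizontal; the last point (if $P$ has at least two points) is a left turn if the last step is horizontal and a right turn if it is vertical; all other points are isolated, and each isolated point is the only point of $P$ having a certain $c\in A$ as row or column index, $c$ being called its index. *)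

(* Defs.v *)
From mathcomp Require Import all_boot.
Set Implicit Arguments. Unset Strict Implicit. Unset Printing Implicit Defensive.

(* Points (i,j) with 0 <= i,j <= n; only those with 1 <= i <= j are variables
   x_{ij} of K[x_ij : 1 <= i <= j <= n]. *)
Definition pt (n : nat) := ('I_n.+1 * 'I_n.+1)%type.
Definition pt0 (n : nat) : pt n := (ord0, ord0).

Definition is_var n (u : pt n) : bool := (0 < u.1) && (u.1 <= u.2).
Definition antidiag n (u : pt n) : bool := u.1 + u.2 == n.+1.
Definition vertexV n (u : pt n) : bool := is_var u && ~~ antidiag u.

Definition K_gen n (u v : pt n) : bool :=
  [&& is_var u, is_var v, ~~ antidiag u, ~~ antidiag v &
      [|| u.1 + v.1 == n.+1, u.1 + v.2 == n.+1, u.2 + v.1 == n.+1,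
          u.2 + v.2 == n.+1 | (u.1 < v.1) && (u.2 < v.2)]].

(* Monomials are represented by exponent vectors; exponent vector of x_u x_v *)
Definition gen_exp n (u v : pt n) (y : pt n) : nat := (y == u) + (y == v).

Definition in_K2n n (e : pt n -> nat) : Prop :=
  exists u v : pt n, K_gen u v /\ forall y, gen_exp u v y <= e y.

Definition monomial_of n (F : {set pt n}) : pt n -> nat :=
  fun y => nat_of_bool (y \in F).

Definition Delta' n (F : {set pt n}) : Prop :=
  (forall y, y \in F -> vertexV y) /\ ~ in_K2n (monomial_of F).

Definition facet n (C : {set pt n} -> Prop) (F : {set pt n}) : Prop :=
  C F /\ forall G, C G -> F \subset G -> G = F.

Definition in_calA (m : nat) (A : {set 'I_(2 * m).+1}) : Prop :=
  [/\ #|A| = m, (forall i, i \in A -> 0 < i) &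
      forall i j, i \in A -> j \in A -> i + j != (2 * m).+1].

Definition T_A n (A : {set 'I_n.+1}) : {set pt n} :=
  [set u | [&& u.1 \in A, u.2 \in A & u.1 <= u.2]].

Definition DeltaA n (A : {set 'I_n.+1}) (F : {set pt n}) : Prop :=
  Delta' F /\ F \subset T_A A.

Definition consec n (A : {set 'I_n.+1}) (c d : 'I_n.+1) : bool :=
  [&& c \in A, d \in A, c < d & [forall e in A, ~~ ((c < e) && (e < d))]].

Definition hstep n (A : {set 'I_n.+1}) (u v : pt n) : bool :=
  (v.1 == u.1) && consec A v.2 u.2.
Definition vstep n (A : {set 'I_n.+1}) (u v : pt n) : bool :=
  (v.2 == u.2) && consec A u.1 v.1.

Definition is_path n (A : {set 'I_n.+1}) (s : seq (pt n)) : bool :=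
  match s with
  | [::] => false
  | p0 :: s' =>
      [&& p0.1 \in A, [forall c in A, p0.1 <= c],
          p0.2 \in A, [forall c in A, c <= p0.2],
          all (fun u => u \in T_A A) s,
          path (fun u v => hstep A u v || vstep A u v) p0 s' &
          (last p0 s').1 == (last p0 s').2]
  end.

Definition left_turn_at n (A : {set 'I_n.+1}) (s : seq (pt n)) (k : nat) : bool :=
  [&& 0 < k, hstep A (nth (pt0 n) s k.-1) (nth (pt0 n) s k) &
      (k.+1 == size s) ||
      (k.+1 < size s) && vstep A (nth (pt0 n) s k) (nth (pt0 n) s k.+1)].
Definition right_turn_at n (A : {set 'I_n.+1}) (s : seq (pt n)) (k : nat) : bool :=
  [&& 0 < k, vstep A (nth (pt0 n) s k.-1) (nth (pt0 n) s k) &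
      (k.+1 == size s) ||
      (k.+1 < size s) && hstep A (nth (pt0 n) s k) (nth (pt0 n) s k.+1)].

Definition turn_in n (A : {set 'I_n.+1}) (s : seq (pt n)) (x : pt n) : Prop :=
  exists k, [/\ k < size s, nth (pt0 n) s k = x &
                left_turn_at A s k || right_turn_at A s k].

Definition is_turn n (A : {set 'I_n.+1}) (P : {set pt n}) (x : pt n) : Prop :=
  exists s, [/\ is_path A s, [set y in s] = P & turn_in A s x].

Definition is_isolated n (A : {set 'I_n.+1}) (P : {set pt n}) (x : pt n) : Prop :=
  exists s, [/\ is_path A s, [set y in s] = P, x \in s & ~ turn_in A s x].

Definition has_index n (A : {set 'I_n.+1}) (P : {set pt n}) (x : pt n)
  (c : 'I_n.+1) : Prop :=
  [/\ c \in A, x.1 = c \/ x.2 = c &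
      forall y, y \in P -> y != x -> y.1 != c /\ y.2 != c].

Definition swapA n (A : {set 'I_n.+1}) (i : 'I_n.+1) : {set 'I_n.+1} :=
  (A :\ i) :|: [set inord (n.+1 - i)].

(* Main.v *)
Require Import Defs.
From mathcomp Require Import all_boot zify.
Set Implicit Arguments. Unset Strict Implicit. Unset Printing Implicit Defensive.

Section Basic.
Variable n : nat.
Implicit Types (u v : pt n) (B : {set 'I_n.+1}) (S F : {set pt n}).

Definition nest u v : bool :=
  ((u.1 <= v.1) && (v.2 <= u.2)) || ((v.1 <= u.1) && (u.2 <= v.2)).
Definition compat u v : Prop := ~~ K_gen u v /\ ~~ K_gen v u.
Definition chain S := forall u v, u \in S -> v \in S -> nest u v.
Definition sumfree B := forall i j, i \in B -> j \in B -> i + j != n.+1.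
Definition posB B := forall i, i \in B -> 0 < i.

Lemma Delta'P F : Delta' F <->
  (forall y, y \in F -> vertexV y) /\ (forall u v, u \in F -> v \in F -> u != v -> ~~ K_gen u v).
Proof.
rewrite /Delta'; split=> -[hV hK]; split=> //.
  move=> u v uF vF uv; apply/negP=> K; apply: hK; exists u, v; split=> // y.
  idtac.
  rewrite /gen_exp /monomial_of.
  case yu: (y == u); case yv: (y == v) => //=.
  - by move: uv; rewrite -(eqP yu) -(eqP yv) eqxx.
  - by rewrite (eqP yu) uF.
  - by rewrite (eqP yv) vF.
move=> [u [v [K hle]]].
have hu := hle u; have hv := hle v; move: hu hv.
rewrite /gen_exp /monomial_of !eqxx /=.
have [uv|uv] := eqVneq u v.
  by move: uv => <-; rewrite /= ; case: (u \in F).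
rewrite /=.
case uF: (u \in F) => //; case vF: (v \in F) => // _ _.
by move: (hK u v uF vF uv); rewrite K.
Qed.

Lemma compat_nest u v : vertexV u -> vertexV v -> compat u v -> nest u v.
Proof.
move=> /andP[hu hu'] /andP[hv hv'] [k1 k2]; move: k1 k2.
rewrite /K_gen hu hv hu' hv' /= /nest => k1 k2.
move: k1 k2; rewrite !negb_or => /and5P[_ _ _ _ a] /and5P[_ _ _ _ b].
lia.
Qed.

End Basic.

Lemma cover_lemma (s : seq nat) a k : uniq s -> (forall y, y \in s -> a <= y < a + k) ->
  k <= size s -> forall y, a <= y < a + k -> y \in s.
Proof.
move=> us hs hk y hy.
have sub : {subset s <= iota a k} by move=> z /hs; rewrite mem_iota.
have [|_ E] := uniq_min_size us sub; first by rewrite size_iota.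
by rewrite E mem_iota.
Qed.

Lemma bound_lemma (s : seq nat) a k : uniq s -> (forall y, y \in s -> a <= y < a + k) ->
  size s <= k.
Proof.
move=> us hs; rewrite -(size_iota a k); apply: uniq_leq_size => // z /hs.
by rewrite mem_iota.
Qed.

Section Rank.
Variable n : nat.
Variable B : {set 'I_n.+1}.
Definition rk (i : 'I_n.+1) : nat := #|[set y in B | y < i]|.

Lemma rk_le (i j : 'I_n.+1) : i <= j -> rk i <= rk j.
Proof.
move=> ij; apply: subset_leq_card; apply/subsetP => y; rewrite !inE => /andP[-> h].
exact: leq_trans h ij.
Qed.

Lemma rk_lt (i j : 'I_n.+1) : i \in B -> i < j -> rk i < rk j.
Proof.
move=> iB ij; apply: proper_card; apply/properP; split.
  apply/subsetP => y; rewrite !inE => /andP[-> h]; exact: ltn_trans h ij.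
by exists i; rewrite !inE ?iB ?ij ?ltnn.
Qed.

Lemma rk_ltB (i : 'I_n.+1) : i \in B -> rk i < #|B|.
Proof.
move=> iB; apply: proper_card; apply/properP; split.
  by apply/subsetP => y; rewrite !inE => /andP[].
by exists i => //; rewrite inE ltnn andbF.
Qed.

Lemma rk_leE (i j : 'I_n.+1) : i \in B -> j \in B -> (rk i <= rk j) = (i <= j).
Proof.
move=> iB jB; apply/idP/idP; last exact: rk_le.
by apply: contraTT; rewrite -!ltnNge; apply: rk_lt.
Qed.

Lemma rk_ltE (i j : 'I_n.+1) : i \in B -> j \in B -> (rk i < rk j) = (i < j).
Proof. by move=> iB jB; rewrite !ltnNge rk_leE. Qed.

Lemma rk_inj (i j : 'I_n.+1) : i \in B -> j \in B -> rk i = rk j -> i = j.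
Proof.
move=> iB jB e; apply/val_inj/eqP; rewrite eqn_leq -!rk_leE // e; lia.
Qed.

Lemma rk_surj r : r < #|B| -> exists2 i, i \in B & rk i = r.
Proof.
move=> rB.
have us : uniq (map rk (enum B)).
  rewrite map_inj_in_uniq ?enum_uniq // => i j; rewrite !mem_enum; exact: rk_inj.
have : r \in map rk (enum B).
  apply: (@cover_lemma _ 0 #|B| us) => //.
    by move=> y /mapP[i]; rewrite mem_enum => iB ->; rewrite add0n rk_ltB.
  by rewrite size_map -cardE.
by move=> /mapP[i]; rewrite mem_enum => iB ->; exists i.
Qed.
End Rank.

Ltac rkgen := repeat match goal with
 | |- context [@rk ?m ?B ?x] => let X := fresh "X" in move: (@rk m B x) => X
 | |- context [#|?B|] => let X := fresh "C" in move: (#|B|) => X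
 end.
Ltac clear_all := repeat match goal with H : _ |- _ => clear H end.
Ltac rlia := rkgen; clear_all; lia.

Section Chain.
Variable n : nat.
Variable B : {set 'I_n.+1}.
Local Notation M := #|B|.
Local Notation rkB := (rk B).
Implicit Types (u v p w : pt n) (S : {set pt n}).

Definition lv u := rkB u.2 - rkB u.1.

Lemma TP u : u \in T_A B -> [/\ u.1 \in B, u.2 \in B & u.1 <= u.2].
Proof. by rewrite inE => /and3P. Qed.

Lemma rT u : u \in T_A B -> rkB u.1 <= rkB u.2 < M.
Proof. by case/TP => h1 h2 h3; rewrite rk_le // rk_ltB. Qed.

Lemma rnest u v : u \in T_A B -> v \in T_A B -> nest u v =
  ((rkB u.1 <= rkB v.1) && (rkB v.2 <= rkB u.2)) || ((rkB v.1 <= rkB u.1) && (rkB u.2 <= rkB v.2)).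
Proof. by case/TP => ? ? _ /TP[? ? _]; rewrite /nest !rk_leE. Qed.

Lemma req u v : u \in T_A B -> v \in T_A B -> rkB u.1 = rkB v.1 -> rkB u.2 = rkB v.2 -> u = v.
Proof.
case: u v => [u1 u2] [v1 v2] /TP[/= h1 h2 _] /TP[/= h3 h4 _] e1 e2.
have E1 := rk_inj h1 h3 e1; have E2 := rk_inj h2 h4 e2.
by rewrite E1 E2.
Qed.

Lemma rnestC S : S \subset T_A B -> chain S -> forall u v, u \in S -> v \in S ->
  [/\ ((rkB u.1 <= rkB v.1) && (rkB v.2 <= rkB u.2)) || ((rkB v.1 <= rkB u.1) && (rkB u.2 <= rkB v.2)),
      rkB u.1 <= rkB u.2 < M & rkB v.1 <= rkB v.2 < M].
Proof.
move=> /subsetP sT ch u v uS vS; rewrite -rnest ?sT ?ch //.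
by rewrite !rT ?sT.
Qed.

Lemma lv_inj S : S \subset T_A B -> chain S -> {in S &, injective lv}.
Proof.
move=> sT ch u v uS vS; have [h hu hv] := rnestC sT ch uS vS; rewrite /lv => e.
move/subsetP: sT => sT.
apply: req; rewrite ?sT //; lia.
Qed.

Lemma lv_lt u : u \in T_A B -> lv u < M.
Proof. by move/rT; rewrite /lv; rlia. Qed.

Lemma chain_card S : S \subset T_A B -> chain S -> #|S| <= M.
Proof.
move=> sT ch; rewrite cardE -(size_map lv); apply: (@bound_lemma _ 0).
  by rewrite map_inj_in_uniq ?enum_uniq // => u v; rewrite !mem_enum; apply: lv_inj.
move=> y /mapP[u]; rewrite mem_enum => uS ->; rewrite add0n lv_lt //.
exact: (subsetP sT).
Qed.

Lemma chain_full S : S \subset T_A B -> chain S -> M <= #|S| ->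
  forall l, l < M -> exists2 p, p \in S & lv p = l.
Proof.
move=> sT ch hc l lM.
have : l \in map lv (enum S).
  apply: (@cover_lemma _ 0 M) => //.
  - by rewrite map_inj_in_uniq ?enum_uniq // => u v; rewrite !mem_enum; apply: lv_inj.
  - move=> y /mapP[u]; rewrite mem_enum => uS ->; rewrite add0n lv_lt //.
    exact: (subsetP sT).
  - by rewrite size_map -cardE.
by case/mapP => u; rewrite mem_enum => uS ->; exists u.
Qed.

Lemma full_card S : (forall l, l < M -> exists2 p, p \in S & lv p = l) -> M <= #|S|.
Proof.
move=> hf; rewrite [#|S|]cardE -(size_map lv) -[X in X <= _](size_iota 0 M); apply: uniq_leq_size.
  exact: iota_uniq.
move=> l; rewrite mem_iota add0n => /hf[p pS <-]; apply: map_f; by rewrite mem_enum.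
Qed.

Lemma extend S l : S \subset T_A B -> chain S -> l < M ->
  (forall p, p \in S -> lv p != l) ->
  exists w, [/\ w \in T_A B, lv w = l & forall p, p \in S -> nest w p].
Proof.
move=> sT ch lM hl.
have sT' := subsetP sT.
set a1 := \max_(p | (p \in S) && (l < lv p)) rkB p.1.
set a2 := \max_(p | (p \in S) && (lv p < l)) (rkB p.2 - l).
have ha1 : a1 <= M - 1 - l.
  apply/bigmax_leqP => p /andP[pS]; have := rT (sT' _ pS); rewrite /lv; rlia.
have ha2 : a2 <= M - 1 - l.
  apply/bigmax_leqP => p /andP[pS]; have := rT (sT' _ pS); rewrite /lv; rlia.
have [e1 e1B r1] := @rk_surj _ B (maxn a1 a2) ltac:(move: ha1 ha2 lM; rlia).
have [e2 e2B r2] := @rk_surj _ B (maxn a1 a2 + l) ltac:(move: ha1 ha2 lM; rlia).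
have wT : (e1, e2) \in T_A B.
  by rewrite inE /= e1B e2B -(rk_leE e1B e2B) r1 r2 leq_addr.
exists (e1, e2); split => //; first by rewrite /lv /=; move: r1 r2; rlia.
move=> p pS; rewrite (rnest wT (sT' _ pS)) /=.
have := hl p pS; rewrite neq_ltn => /orP[plt|pgt].
  have h1 : rkB p.2 - l <= a2 by rewrite /a2 (bigD1 p) /= ?pS ?plt // leq_maxl.
  have h2 : maxn a1 a2 <= rkB p.1.
    rewrite geq_max; apply/andP; split; apply/bigmax_leqP => p' /andP[p'S hp'];
    have [] := rnestC sT ch pS p'S; move: plt hp'; rewrite /lv; rlia.
  move: plt h1 h2 r1 r2; rewrite /lv; rlia.
have h1 : rkB p.1 <= a1 by rewrite /a1 (bigD1 p) /= ?pS ?pgt // leq_maxl.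
have h2 : maxn a1 a2 <= rkB p.2 - l.
  rewrite geq_max; apply/andP; split; apply/bigmax_leqP => p' /andP[p'S hp'];
  have [] := rnestC sT ch pS p'S; move: pgt hp'; rewrite /lv; rlia.
move: pgt h1 h2 r1 r2; rewrite /lv; rlia.
Qed.

End Chain.

Definition shared n (P : {set pt n}) (x : pt n) (e : 'I_n.+1) :=
  exists2 y, y \in P & (y != x) && ((y.1 == e) || (y.2 == e)).

Section Shape.
Variables (n : nat) (B : {set 'I_n.+1}) (P : {set pt n}).
Hypotheses (sT : P \subset T_A B) (ch : chain P)
  (full : forall l, l < #|B| -> exists2 p, p \in P & lv B p = l).
Implicit Types (x p q u v U D : pt n).

Lemma PT p : p \in P -> p \in T_A B.
Proof. exact: (subsetP sT). Qed.

Lemma Pinj p q : p \in P -> q \in P -> lv B p = lv B q -> p = q.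
Proof. move=> pP qP; exact: (lv_inj sT ch pP qP). Qed.

Lemma Pcont p q : p \in P -> q \in P -> lv B p <= lv B q ->
  rk B q.1 <= rk B p.1 /\ rk B p.2 <= rk B q.2.
Proof. move=> pP qP; have [] := rnestC sT ch pP qP; rewrite /lv; rlia. Qed.

Lemma Teq u v : u \in T_A B -> v \in T_A B -> rk B u.1 = rk B v.1 -> lv B u = lv B v -> u = v.
Proof.
move=> uT vT e1 e2; apply: (req uT vT) => //; move: e1 e2 (rT uT) (rT vT); rewrite /lv; rlia.
Qed.

Lemma PE0 x v : x \in P -> v \in T_A B -> (forall p, p \in P -> p != x -> nest v p) ->
  lv B v != lv B x -> v \in P.
Proof.
move=> xP vT hv hk; have [p pP pl] := full (lv_lt vT).
have px : p != x by apply: contraNneq hk => e; rewrite -pl e.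
have := hv p pP px; rewrite (rnest vT (PT pP)) => hn.
suff -> : v = p by [].
apply: (Teq vT (PT pP)); move: hn pl (rT vT) (rT (PT pP)); rewrite /lv; rlia.
Qed.

Lemma turn_case x U a : x \in P -> U \in P -> lv B U = (lv B x).+1 -> a != rk B x.1 ->
  rk B U.1 <= a -> a + lv B x <= rk B U.2 ->
  (forall p, p \in P -> lv B p < lv B x -> a <= rk B p.1 /\ rk B p.2 <= a + lv B x) ->
  (forall v, v \in T_A B -> lv B v = lv B x -> (forall p, p \in P -> p != x -> nest v p) ->
     rk B v.1 = rk B x.1 \/ rk B v.1 = a) ->
  exists q, [/\ q \in T_A B, q \notin P, ~~ nest x q, (forall p, p \in P -> p != x -> nest q p) &
      forall v, v \in T_A B -> (forall p, p \in P -> p != x -> nest v p) -> v \in P \/ v = q].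
Proof.
move=> xP UP lU ax Ua aU hlow hE.
have xT := PT xP; have UT := PT UP.
have aM : a + lv B x < #|B| by move: aU (rT UT); rlia.
have [e1 e1B r1] : exists2 e, e \in B & rk B e = a by apply: rk_surj; move: aM; rlia.
have [e2 e2B r2] : exists2 e, e \in B & rk B e = a + lv B x by apply: rk_surj.
have qT : (e1, e2) \in T_A B.
  by rewrite inE /= e1B e2B -(rk_leE e1B e2B); move: r1 r2; rlia.
have lq : lv B (e1, e2) = lv B x by rewrite /lv /=; move: r1 r2; rewrite /lv; rlia.
exists (e1, e2); split => //.
- apply/negP => qP; have eq := Pinj qP xP lq.
  by move: ax r1; rewrite -eq /=; rlia.
- rewrite (rnest xT qT) /=; move: ax r1 r2 (rT xT); rewrite /lv; rlia.
- move=> p pP px; have pT := PT pP; rewrite (rnest qT pT) /=.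
  case: (ltngtP (lv B p) (lv B x)) => h.
  + have [] := hlow p pP h; move: r1 r2 (rT pT); rlia.
  + have [] := Pcont UP pP ltac:(rewrite lU; exact: h).
    move: r1 r2 (rT pT) Ua aU; rlia.
  + by move: px; rewrite (Pinj pP xP h) eqxx.
- move=> v vT hv.
  case: (lv B v =P lv B x) => lvx; last by left; apply: (PE0 xP vT hv); apply/eqP.
  case: (hE v vT lvx hv) => h.
    by left; rewrite (Teq vT xT h lvx).
  right; apply: (Teq vT qT); last by rewrite lvx.
  by move: h r1; rlia.
Qed.


Lemma sh x y e : y \in P -> y != x -> e \in B -> (rk B y.1 = rk B e \/ rk B y.2 = rk B e) ->
  shared P x e.
Proof.
move=> yP yx eB h; exists y => //; rewrite yx /=.
have /TP[y1 y2 _] := PT yP.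
by case: h => h; [rewrite (rk_inj y1 eB h) eqxx | rewrite (rk_inj y2 eB h) eqxx orbT].
Qed.

Definition ISO x := (forall v, v \in T_A B -> (forall p, p \in P -> p != x -> nest v p) -> v \in P)
   /\ exists c, has_index B P x c /\ forall e, (x.1 = e \/ x.2 = e) -> e != c -> shared P x e.
Definition TURN x := (exists q, [/\ q \in T_A B, q \notin P, ~~ nest x q,
      (forall p, p \in P -> p != x -> nest q p) &
      forall v, v \in T_A B -> (forall p, p \in P -> p != x -> nest v p) -> v \in P \/ v = q])
   /\ forall e, (x.1 = e \/ x.2 = e) -> shared P x e.

Lemma iso_case x c : x \in P -> c \in B -> (x.1 = c \/ x.2 = c) ->
  (forall v, v \in T_A B -> lv B v = lv B x -> (forall p, p \in P -> p != x -> nest v p) ->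
     rk B v.1 = rk B x.1) ->
  (forall y, y \in P -> lv B y != lv B x -> rk B y.1 != rk B c /\ rk B y.2 != rk B c) ->
  (forall e, (x.1 = e \/ x.2 = e) -> e != c -> shared P x e) ->
  ISO x.
Proof.
move=> xP cB xc hE hI hS; split.
  move=> v vT hv; case: (lv B v =P lv B x) => lvx; last by apply: (PE0 xP vT hv); apply/eqP.
  by rewrite (Teq vT (PT xP) (hE v vT lvx hv) lvx).
exists c; split => //; split => // y yP yx.
have ly : lv B y != lv B x by apply: contraNneq yx => e; apply/eqP; exact: Pinj yP xP e.
have [h1 h2] := hI y yP ly.
by split; [apply: contraNneq h1 => -> | apply: contraNneq h2 => ->].
Qed.

Lemma lvE u : u \in T_A B -> rk B u.1 + lv B u = rk B u.2.
Proof. by move=> uT; have := rT uT; rewrite /lv; rlia. Qed.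

Lemma shape x : x \in P -> TURN x \/ ISO x.
Proof.
move=> xP; have xT := PT xP; have rx := rT xT; have ex := lvE xT.
have /TP[x1B x2B _] := xT.
have lxM := lv_lt xT.
case: (ltnP (lv B x).+1 #|B|) => kU.
  have [U UP lU] := full kU; have UT := PT UP; have rU := rT UT; have eU := lvE UT.
  have Ux : U != x by apply/eqP => e; move: lU; rewrite e; clear_all; lia.
  have [cU1 cU2] := Pcont xP UP ltac:(rewrite lU; exact: leqnSn).
  case: (posnP (lv B x)) => [k0|kpos].
    left; split.
      apply: (turn_case (a := rk B U.1 + rk B U.1 + 1 - rk B x.1) xP UP) => //.
      - by move: k0 lU cU1 cU2 ex eU; rlia.
      - by move: k0 lU cU1 cU2 ex eU; rlia.
      - by move: k0 lU cU1 cU2 ex eU; rlia.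
      - by move=> p _; rewrite k0.
      - move=> v vT lvx hv; have := hv U UP Ux; rewrite (rnest vT UT).
        by move: k0 lU cU1 cU2 ex eU lvx (lvE vT); rlia.
    move=> e [<-|<-]; apply: (sh UP Ux) => //;
      by move: k0 lU cU1 cU2 ex eU; rlia.
  have [D DP lD] := full (ltac:(move: kpos lxM; clear_all; lia) : (lv B x).-1 < #|B|).
  have DT := PT DP; have rD := rT DT; have eD := lvE DT.
  have lD' : lv B D + 1 = lv B x by rewrite lD; move: kpos; clear_all; lia.
  clear lD.
  have Dx : D != x by apply/eqP => e; move: lD'; rewrite e; clear_all; lia.
  have [cD1 cD2] := Pcont DP xP ltac:(rewrite -lD'; exact: leq_addr).
  case: (rk B D.1 =P rk B U.1 + 1) => dU.
    left; split.
      apply: (turn_case (a := rk B U.1 + rk B U.1 + 1 - rk B x.1) xP UP) => //.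
      - by move: dU lD' lU cU1 cU2 cD1 cD2 ex eU eD; rlia.
      - by move: dU lD' lU cU1 cU2 cD1 cD2 ex eU eD; rlia.
      - by move: dU lD' lU cU1 cU2 cD1 cD2 ex eU eD; rlia.
      - move=> p pP lp.
        have hle : lv B p <= lv B D by move: lp lD'; clear_all; lia.
        have [] := Pcont pP DP hle.
        by move: dU lD' lU cU1 cU2 cD1 cD2 ex eU eD (lvE (PT pP)); rlia.
      - move=> v vT lvx hv; have := hv U UP Ux; rewrite (rnest vT UT).
        have := hv D DP Dx; rewrite (rnest vT DT).
        by move: dU lD' lU cU1 cU2 cD1 cD2 ex eU eD lvx (lvE vT); rlia.
    have [ha|ha] : rk B x.1 = rk B U.1 \/ rk B x.1 = rk B U.1 + 1.
      by move: dU lD' lU cU1 cU2 cD1 cD2 ex eU eD; rlia.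
      move=> e [<-|<-]; [apply: (sh UP Ux) | apply: (sh DP Dx)] => //;
      by move: ha dU lD' lU cU1 cU2 cD1 cD2 ex eU eD; rlia.
    move=> e [<-|<-]; [apply: (sh DP Dx) | apply: (sh UP Ux)] => //;
    by move: ha dU lD' lU cU1 cU2 cD1 cD2 ex eU eD; rlia.
  right; case: (rk B D.1 =P rk B x.1) => dα.
    apply: (iso_case (c := x.2) xP) => //; first by right.
    - move=> v vT lvx hv; have := hv U UP Ux; rewrite (rnest vT UT).
      have := hv D DP Dx; rewrite (rnest vT DT).
      by move: dα dU lD' lU cU1 cU2 cD1 cD2 ex eU eD lvx (lvE vT); rlia.
    - move=> y yP ly; have ey := lvE (PT yP); case: (ltngtP (lv B y) (lv B x)) => h.
      + have hle : lv B y <= lv B D by move: h lD'; clear_all; lia.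
        have [] := Pcont yP DP hle.
        by move: dα dU lD' lU cU1 cU2 cD1 cD2 ex eU eD ey (rT (PT yP)); rlia.
      + have hle : lv B U <= lv B y by move: h lU; clear_all; lia.
        have [] := Pcont UP yP hle.
        by move: dα dU lD' lU cU1 cU2 cD1 cD2 ex eU eD ey (rT (PT yP)); rlia.
      + by move: ly; rewrite h eqxx.
    - move=> e [<-|<-] ec; last by rewrite eqxx in ec.
      apply: (sh DP Dx) => //; by left.
  apply: (iso_case (c := x.1) xP) => //; first by left.
  - move=> v vT lvx hv; have := hv U UP Ux; rewrite (rnest vT UT).
    have := hv D DP Dx; rewrite (rnest vT DT).
    by move: dα dU lD' lU cU1 cU2 cD1 cD2 ex eU eD lvx (lvE vT); rlia.
  - move=> y yP ly; have ey := lvE (PT yP); case: (ltngtP (lv B y) (lv B x)) => h.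
    + have hle : lv B y <= lv B D by move: h lD'; clear_all; lia.
      have [] := Pcont yP DP hle.
      by move: dα dU lD' lU cU1 cU2 cD1 cD2 ex eU eD ey (rT (PT yP)); rlia.
    + have hle : lv B U <= lv B y by move: h lU; clear_all; lia.
      have [] := Pcont UP yP hle.
      by move: dα dU lD' lU cU1 cU2 cD1 cD2 ex eU eD ey (rT (PT yP)); rlia.
    + by move: ly; rewrite h eqxx.
  - move=> e [<-|<-] ec; first by rewrite eqxx in ec.
    apply: (sh DP Dx) => //; right.
    by move: dα dU lD' lU cU1 cU2 cD1 cD2 ex eU eD; rlia.
right.
case: (posnP (lv B x)) => [k0|kpos].
  apply: (iso_case (c := x.1) xP) => //; first by left.
  - move=> v vT lvx hv.
    by move: k0 kU lxM rx ex lvx (lvE vT) (rT vT); rlia.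
  - move=> y yP ly; have ry := rT (PT yP); have := lv_lt (PT yP).
    by move: k0 kU lxM ly; clear_all; lia.
  - move=> e [<-|<-] ec; first by rewrite eqxx in ec.
    suff E : x.2 = x.1 by rewrite E eqxx in ec.
    by apply: (rk_inj x2B x1B); move: k0 ex; rlia.
have [D DP lD] := full (ltac:(move: kpos lxM; clear_all; lia) : (lv B x).-1 < #|B|).
have DT := PT DP; have rD := rT DT; have eD := lvE DT.
have lD' : lv B D + 1 = lv B x by rewrite lD; move: kpos; clear_all; lia.
clear lD.
have Dx : D != x by apply/eqP => e; move: lD'; rewrite e; clear_all; lia.
have [cD1 cD2] := Pcont DP xP ltac:(rewrite -lD'; exact: leq_addr).
have lowy : forall y, y \in P -> lv B y != lv B x -> rk B D.1 <= rk B y.1 /\ rk B y.2 <= rk B D.2.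
  move=> y yP ly; apply: Pcont => //.
  by move: ly (lv_lt (PT yP)) kU lD'; clear_all; lia.
case: (rk B D.1 =P rk B x.1) => dα.
  apply: (iso_case (c := x.2) xP) => //; first by right.
  - move=> v vT lvx hv.
    by move: kU lxM rx ex lvx (lvE vT) (rT vT); rlia.
  - move=> y yP ly; have [] := lowy y yP ly.
    by move: dα lD' cD1 cD2 ex eD (lvE (PT yP)) (rT (PT yP)); rlia.
  - move=> e [<-|<-] ec; last by rewrite eqxx in ec.
    apply: (sh DP Dx) => //; by left.
apply: (iso_case (c := x.1) xP) => //; first by left.
- move=> v vT lvx hv.
  by move: kU lxM rx ex lvx (lvE vT) (rT vT); rlia.
- move=> y yP ly; have [] := lowy y yP ly.
  by move: dα lD' cD1 cD2 ex eD (lvE (PT yP)) (rT (PT yP)); rlia.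
- move=> e [<-|<-] ec; first by rewrite eqxx in ec.
  apply: (sh DP Dx) => //; right.
  by move: dα lD' cD1 cD2 ex eD; rlia.
Qed.

End Shape.

Section Gen.
Variable n : nat.
Implicit Types (u v p q x : pt n) (B : {set 'I_n.+1}) (P F G : {set pt n}).

Lemma nestC u v : nest u v = nest v u.
Proof. by rewrite /nest orbC. Qed.

Lemma nest_refl u : nest u u.
Proof. by rewrite /nest !leqnn. Qed.

Lemma T_vertex B u : posB B -> sumfree B -> u \in T_A B -> vertexV u.
Proof.
move=> pB sB /TP[h1 h2 h3]; rewrite /vertexV /is_var /antidiag pB //= h3 /=.
exact: sB.
Qed.

Lemma nest_noK B u v : sumfree B -> u \in T_A B -> v \in T_A B -> nest u v -> ~~ K_gen u v.
Proof.
move=> sB /TP[u1 u2 _] /TP[v1 v2 _] nuv; rewrite /K_gen.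
rewrite (negPf (sB _ _ u1 v1)) (negPf (sB _ _ u1 v2)) (negPf (sB _ _ u2 v1)) (negPf (sB _ _ u2 v2)) /=.
by move: nuv; rewrite /nest; case: (u.1 < v.1) / ltP => /=; lia.
Qed.

Lemma nest_compat B u v : sumfree B -> u \in T_A B -> v \in T_A B -> nest u v -> compat u v.
Proof.
move=> sB uT vT nuv; split; first exact: (nest_noK sB).
by apply: (nest_noK sB) => //; rewrite nestC.
Qed.

Lemma face_compat F u v : Delta' F -> u \in F -> v \in F -> u != v -> compat u v.
Proof.
move/Delta'P => [_ hK] uF vF uv; split; first exact: hK.
by apply: hK => //; rewrite eq_sym.
Qed.

Lemma facetA_chain B P : facet (DeltaA B) P -> P \subset T_A B /\ chain P.
Proof.
move=> [[hD sT] _]; split => // u v uP vP.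
have [->|uv] := eqVneq u v; first exact: nest_refl.
have /Delta'P [hV _] := hD.
by apply: compat_nest; [apply: hV | apply: hV | apply: face_compat hD uP vP uv].
Qed.

Lemma facetA_full B P : posB B -> sumfree B -> facet (DeltaA B) P ->
  forall l, l < #|B| -> exists2 p, p \in P & lv B p = l.
Proof.
move=> pB sB fP l lM; have [sT ch] := facetA_chain fP.
case: (boolP [exists p in P, lv B p == l]) => [/existsP[p /andP[pP /eqP e]]|ne].
  by exists p.
have hl : forall p, p \in P -> lv B p != l.
  move=> p pP; apply/negP => e; move/negP: ne; apply; apply/existsP; exists p; by rewrite pP.
have [w [wT lw nw]] := extend sT ch lM hl.
have wP : w \in P.
  have : w |: P = P.
    apply: (proj2 fP); last exact: subsetUr.
    split; last by rewrite subUset sub1set wT sT.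
    apply/Delta'P; split.
      move=> y; rewrite !inE => /orP[/eqP ->|yP]; first exact: T_vertex wT.
      by apply: T_vertex pB sB _; apply: (subsetP sT).
    move=> u v; rewrite !inE => /orP[/eqP ->|uP] /orP[/eqP ->|vP] uv.
    - by rewrite eqxx in uv.
    - by apply: (nest_noK sB wT); [apply: (subsetP sT) | apply: nw].
    - by apply: (nest_noK sB); [apply: (subsetP sT) | | rewrite nestC; apply: nw].
    - by have /Delta'P [_ hK] := proj1 (proj1 fP); apply: hK.
  by move=> <-; rewrite setU11.
by move: (hl w wP); rewrite lw eqxx.
Qed.

End Gen.

Lemma coverage n (B : {set 'I_n.+1}) (P : {set pt n}) :
  P \subset T_A B -> chain P -> (forall l, l < #|B| -> exists2 p, p \in P & lv B p = l) ->
  forall d, d \in B -> exists2 p, p \in P & (p.1 = d \/ p.2 = d).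
Proof.
move=> sT ch full d dB.
have rd := rk_ltB dB.
pose Qb l := [exists p in P, (lv B p == l) && (rk B p.1 <= rk B d <= rk B p.2)].
have hex : exists l, Qb l.
  exists (#|B|).-1; have [p pP lp] := full (#|B|).-1 ltac:(move: rd; clear_all; lia).
  apply/existsP; exists p; rewrite pP lp eqxx /=.
  have := lvE (PT sT pP); have := rT (PT sT pP); move: lp rd; rlia.
case: (ex_minnP hex) => l /existsP[p /andP[pP /and3P[/eqP lp hp1 hp2]]] hmin.
have /TP[p1 p2 _] := PT sT pP.
have ep := lvE (PT sT pP).
case: (posnP l) => [l0|lpos].
  exists p => //; left; apply: (rk_inj p1 dB); move: hp1 hp2 ep l0 lp; rlia.
have [p' p'P lp'] := full l.-1 ltac:(move: lp (lv_lt (PT sT pP)); clear_all; lia).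
have [c1 c2] := Pcont sT ch p'P pP ltac:(rewrite lp lp'; exact: leq_pred).
have ep' := lvE (PT sT p'P).
have nq : ~~ (rk B p'.1 <= rk B d <= rk B p'.2).
  apply/negP => h; have := hmin l.-1; rewrite /Qb.
  have -> : [exists p0 in P, (lv B p0 == l.-1) && (rk B p0.1 <= rk B d <= rk B p0.2)].
    by apply/existsP; exists p'; rewrite p'P lp' eqxx h.
  by move=> /(_ isT); move: lpos; clear_all; lia.
exists p => //.
have : rk B p.1 = rk B d \/ rk B p.2 = rk B d.
  by move: nq c1 c2 ep ep' lp lp' hp1 hp2 lpos; rlia.
by case=> h; [left; apply: rk_inj h | right; apply: rk_inj h].
Qed.

Section Main.
Variable m : nat.
Variable A : {set 'I_(2 * m).+1}.
Hypothesis hA : in_calA A.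

Lemma cardA : #|A| = m. Proof. by case: hA. Qed.
Lemma posA : posB A. Proof. by case: hA. Qed.
Lemma sfA : sumfree A. Proof. by case: hA. Qed.

Lemma pairA (d : 'I_(2 * m).+1) : 0 < d -> d \notin A -> exists2 e, e \in A & d + e = (2 * m).+1.
Proof.
move=> d0 dA.
pose f (b : 'I_(2 * m).+1) := minn b ((2 * m).+1 - b).
have us : uniq (map f (enum A)).
  rewrite map_inj_in_uniq ?enum_uniq // => b b'; rewrite !mem_enum => bA b'A e.
  have : nat_of_ord b = nat_of_ord b' \/ b + b' = (2 * m).+1.
    by move: e (ltn_ord b) (ltn_ord b'); rewrite /f; clear_all; lia.
  case=> [h|h]; first exact: ord_inj.
  by move: (sfA bA b'A); rewrite h eqxx.
have : f d \in map f (enum A).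
  apply: (@cover_lemma _ 1 m us).
  - move=> y /mapP[b]; rewrite mem_enum => bA ->.
    by move: (posA bA) (ltn_ord b); rewrite /f; clear_all; lia.
  - by rewrite size_map -cardE cardA.
  - by move: d0 (ltn_ord d); rewrite /f; clear_all; lia.
case/mapP => b; rewrite mem_enum => bA e.
have : nat_of_ord b = nat_of_ord d \/ d + b = (2 * m).+1.
  by move: e (ltn_ord b) (ltn_ord d); rewrite /f; clear_all; lia.
case=> [h|h]; last by exists b.
by move: dA; rewrite -(ord_inj h) bA.
Qed.

End Main.

Section Gen2.
Variable n : nat.
Implicit Types (u v p q x : pt n) (B : {set 'I_n.+1}) (P F G Q : {set pt n}).

Lemma nest_lv_eq B u v : u \in T_A B -> v \in T_A B -> nest u v -> lv B u = lv B v -> u = v.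
Proof.
move=> uT vT; rewrite (rnest uT vT) => h e; apply: (Teq uT vT) => //.
by move: h e (lvE uT) (lvE vT); rlia.
Qed.

Lemma Ksum u v (a b : 'I_n.+1) : vertexV u -> vertexV v -> (u.1 = a \/ u.2 = a) ->
  (v.1 = b \/ v.2 = b) -> a + b = n.+1 -> K_gen u v.
Proof.
move=> /andP[u1 u2] /andP[v1 v2] ha hb e; rewrite /K_gen u1 u2 v1 v2 /=.
by case: ha => -> ; case: hb => ->; rewrite e eqxx ?orbT.
Qed.

Lemma strictK u v : vertexV u -> vertexV v -> ~~ nest u v -> K_gen u v \/ K_gen v u.
Proof.
move=> /andP[u1 u2] /andP[v1 v2]; rewrite /nest /K_gen u1 u2 v1 v2 /= => h.
have [h1|h1] : (u.1 < v.1) && (u.2 < v.2) \/ (v.1 < u.1) && (v.2 < u.2) by move: h; lia.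
  by left; rewrite h1 !orbT.
by right; rewrite h1 !orbT.
Qed.

Lemma Delta'_sub F G : Delta' F -> G \subset F -> Delta' G.
Proof.
move=> /Delta'P[hV hK] /subsetP sGF; apply/Delta'P; split.
  by move=> y /sGF; apply: hV.
by move=> u v /sGF uF /sGF vF; apply: hK.
Qed.

Lemma facet_sub (C : {set pt n} -> Prop) Q Q' : facet C Q' -> C Q -> Q' \subset Q -> Q = Q'.
Proof. by case=> _ h cQ s; apply: h. Qed.

Section TwoFacets.
Variables (P : {set pt n}) (x q : pt n).
Hypotheses (fP : facet (@Delta' n) P) (xP : x \in P) (qP : q \notin P) (qV : vertexV q)
  (xq : K_gen x q \/ K_gen q x) (cq : forall p, p \in P -> p != x -> compat p q)
  (hC : forall v, vertexV v -> v \notin P :\ x -> (forall p, p \in P -> p != x -> compat p v) ->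
          v = x \/ v = q).

Definition QQ := q |: (P :\ x).

Lemma xq_neq : x != q. Proof. by apply: contraNneq qP => <-. Qed.

Lemma sub_PQ G : Delta' G -> P :\ x \subset G -> G \subset P \/ G \subset QQ.
Proof.
move=> hG sG.
have hv : forall v, v \in G -> v \in P :\ x \/ v = x \/ v = q.
  move=> v vG; case: (boolP (v \in P :\ x)) => vS; first by left.
  right; apply: hC => //; first by have /Delta'P[hV _] := hG; apply: hV.
  move=> p pP px; have pS : p \in P :\ x by rewrite !inE px.
  apply: (face_compat hG) => //; first exact: (subsetP sG).
  by apply: contraNneq vS => <-.
case: (boolP (q \in G)) => qG.
  right; apply/subsetP => v vG.
  case: (hv v vG) => [vS|[ev|->]]; first by rewrite /QQ setU1r.
    exfalso; move: vG; rewrite ev => xG.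
    have /Delta'P[_ hK] := hG.
    have qx : q != x by rewrite eq_sym xq_neq.
    by case: xq => K; [move: (hK x q xG qG xq_neq) | move: (hK q x qG xG qx)]; rewrite K.
  by rewrite /QQ setU11.
left; apply/subsetP => v vG.
case: (hv v vG) => [|[->|ev]] //; first by rewrite inE => /andP[].
by move: vG; rewrite ev (negPf qG).
Qed.

Lemma QQ_face : Delta' QQ.
Proof.
have [hP _] := fP; have /Delta'P[hV hK] := hP.
apply/Delta'P; split.
  move=> y; rewrite !inE => /orP[/eqP ->|/andP[_ yP]] //; exact: hV.
move=> u v; rewrite !inE => /orP[/eqP ->|/andP[ux uP]] /orP[/eqP ->|/andP[vx vP]] uv.
- by rewrite eqxx in uv.
- by have [_ ?] := cq vP vx.
- by have [? _] := cq uP ux.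
- exact: hK.
Qed.

Lemma QQ_neq : QQ != P.
Proof. by apply: contraNneq qP => <-; rewrite setU11. Qed.

Lemma QQ_max G : Delta' G -> QQ \subset G -> G = QQ.
Proof.
move=> hG sQG.
have sG : P :\ x \subset G by apply: subset_trans sQG; apply: subsetUr.
case: (sub_PQ hG sG) => sGP.
  by move: qP; have := subsetP (subset_trans sQG sGP) q (setU11 _ _) => ->.
by apply/eqP; rewrite eqEsubset sGP.
Qed.

Lemma QQ_facet : facet (@Delta' n) QQ.
Proof. by split; [exact: QQ_face | exact: QQ_max]. Qed.

Lemma facets_iff F : (facet (@Delta' n) F /\ P :\ x \subset F) <-> (F = P \/ F = QQ).
Proof.
split.
  move=> [fF sF]; case: (sub_PQ (proj1 fF) sF) => s.
    by left; symmetry; apply: (facet_sub fF) => //; case: fP.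
  by right; symmetry; apply: (facet_sub fF) => //; exact: QQ_face.
case=> ->; split => //; first exact: subD1set.
  exact: QQ_facet.
exact: subsetUr.
Qed.
End TwoFacets.
End Gen2.

Section MainP.
Variable m : nat.
Variable A : {set 'I_(2 * m).+1}.
Hypothesis hA : in_calA A.
Variable P : {set pt (2 * m)}.
Hypothesis fP : facet (DeltaA A) P.
Variable x : pt (2 * m).
Hypothesis xP : x \in P.

Let sTP := (facetA_chain fP).1.
Let chP := (facetA_chain fP).2.
Let fullP := facetA_full (posA hA) (sfA hA) fP.

Lemma PV p : p \in P -> vertexV p.
Proof. by move=> pP; apply: (T_vertex (posA hA) (sfA hA)); apply: (subsetP sTP). Qed.

Lemma outside_coord v d : vertexV v -> (forall p, p \in P -> p != x -> compat p v) ->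
  (v.1 = d \/ v.2 = d) -> d \notin A ->
  exists e, [/\ e \in A, d + e = (2 * m).+1 & has_index A P x e].
Proof.
move=> vV hc hd dA.
have d0 : 0 < d by move: vV => /andP[/andP[h1 h2] _]; case: hd => <-; lia.
have [e eA de] := pairA hA d0 dA.
have hK : forall y, y \in P -> y != x -> ~ (y.1 = e \/ y.2 = e).
  move=> y yP yx hy; have [K _] := hc y yP yx; move/negP: K; apply.
  by apply: (Ksum (PV yP) vV hy hd); rewrite addnC.
exists e; split => //; split => //.
  have [p pP hp] := coverage sTP chP fullP eA.
  have [px|px] := eqVneq p x; first by rewrite -px.
  by case: (hK p pP px).
move=> y yP yx; split; apply/eqP => h; apply: (hK y yP yx); by [left | right].
Qed.

Lemma TURN_noindex : TURN A P x -> forall c, ~ has_index A P x c.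
Proof.
move=> [_ hs] c [cA hc hy]; have [y yP /andP[yx /orP[/eqP h|/eqP h]]] := hs c hc.
  by have [/eqP] := hy y yP yx.
by have [_ /eqP] := hy y yP yx.
Qed.

Lemma ISO_index_unique : ISO A P x -> forall c e, has_index A P x c -> has_index A P x e -> c = e.
Proof.
move=> [_ [c0 [hc0 hs]]] c e.
suff H : forall c, has_index A P x c -> c = c0.
  by move=> /H -> /H ->.
move=> c1 [c1A hc1 hy]; apply/eqP; apply/negP => /negP ne.
have [y yP /andP[yx /orP[/eqP h|/eqP h]]] := hs c1 hc1 ne.
  by have [/eqP] := hy y yP yx.
by have [_ /eqP] := hy y yP yx.
Qed.


Definition qprops (Bq : {set 'I_(2 * m).+1}) (q : pt (2 * m)) :=
  [/\ q \in T_A Bq, q \notin P, vertexV q /\ (K_gen x q \/ K_gen q x),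
      (forall p, p \in P -> p != x -> compat p q) &
      (forall v, vertexV v -> v \notin P :\ x -> (forall p, p \in P -> p != x -> compat p v) ->
          v = x \/ v = q)].

Lemma turn_q : TURN A P x -> exists q, qprops A q.
Proof.
move=> ht; have [[q [qT qP nxq nq hE]] hs] := ht.
have qV : vertexV q := T_vertex (posA hA) (sfA hA) qT.
exists q; split => //.
- by split => //; exact: strictK (PV xP) qV nxq.
- move=> p pP px; apply: (nest_compat (sfA hA)) => //; first exact: (subsetP sTP).
  by rewrite nestC; apply: nq.
move=> v vV vS hc.
case: (boolP (v \in T_A A)) => vT.
  have hn : forall p, p \in P -> p != x -> nest v p.
    by move=> p pP px; rewrite nestC; apply: compat_nest (PV pP) vV (hc p pP px).
  case: (hE v vT hn) => [vP'|->]; last by right.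
  by left; move: vS; rewrite !inE vP' andbT negbK => /eqP.
exfalso.
have : (v.1 \notin A) \/ (v.2 \notin A).
  move: vT; rewrite inE; case: (v.1 \in A) => /=; last by left.
  case: (v.2 \in A) => /=; last by right.
  by move: vV => /andP[/andP[_ ->] _].
case=> dA.
  have [e [_ _ he]] := outside_coord vV hc (or_introl erefl) dA.
  exact: (TURN_noindex ht he).
have [e [_ _ he]] := outside_coord vV hc (or_intror erefl) dA.
exact: (TURN_noindex ht he).
Qed.
End MainP.

Section Iso.
Variable m : nat.
Variable A : {set 'I_(2 * m).+1}.
Hypothesis hA : in_calA A.
Variable P : {set pt (2 * m)}.
Hypothesis fP : facet (DeltaA A) P.
Variable x : pt (2 * m).
Hypothesis xP : x \in P.
Variable c : 'I_(2 * m).+1.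
Hypothesis hc : has_index A P x c.
Hypothesis hiso : ISO A P x.

Let sTP := (facetA_chain fP).1.
Let chP := (facetA_chain fP).2.
Let fullP := facetA_full (posA hA) (sfA hA) fP.

Definition c' : 'I_(2 * m).+1 := inord ((2 * m).+1 - c).
Definition A' := swapA A c.

Lemma cA : c \in A. Proof. by case: hc. Qed.
Lemma c_pos : 0 < c. Proof. by apply: (posA hA); exact: cA. Qed.
Lemma vc' : (c' : nat) = (2 * m).+1 - c.
Proof. by rewrite /c' inordK //; have := c_pos; lia. Qed.
Lemma cc' : c + c' = (2 * m).+1.
Proof. rewrite vc'; have := ltn_ord c; lia. Qed.
Lemma c'A : c' \notin A.
Proof. by apply/negP => h; have := sfA hA cA h; rewrite cc' eqxx. Qed.
Lemma c'c : c' != c.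
Proof. by apply: contraNneq c'A => ->; exact: cA. Qed.
Lemma inA' i : (i \in A') = ((i != c) && (i \in A)) || (i == c').
Proof. by rewrite /A' /swapA !inE. Qed.
Lemma cA' : c \notin A'.
Proof. by rewrite inA' eqxx /= eq_sym (negPf c'c). Qed.
Lemma c'A' : c' \in A'.
Proof. by rewrite inA' eqxx orbT. Qed.
Lemma m_pos : 0 < m.
Proof. by rewrite -(cardA hA); apply/card_gt0P; exists c; exact: cA. Qed.
Lemma cardA' : #|A'| = m.
Proof.
rewrite /A' /swapA setUC cardsU1.
have -> : c' \notin A :\ c by rewrite !inE negb_and c'A orbT.
have := cardsD1 c A; rewrite cA (cardA hA) /= => e.
by move: e; rlia.
Qed.
Lemma posA' : posB A'.
Proof.
move=> i; rewrite inA' => /orP[/andP[_ iA]|/eqP ->]; first by apply: (posA hA); exact: iA.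
by rewrite vc'; have := ltn_ord c; lia.
Qed.
Lemma sfA' : sumfree A'.
Proof.
move=> i j; rewrite !inA' => /orP[/andP[ic iA]|/eqP ->] /orP[/andP[jc jA]|/eqP ->].
- by apply: (sfA hA).
- apply/eqP => e; move: ic; suff -> : i = c by rewrite eqxx.
  by apply: ord_inj; move: e; rewrite vc'; have := ltn_ord c; have := c_pos; lia.
- apply/eqP => e; move: jc; suff -> : j = c by rewrite eqxx.
  by apply: ord_inj; move: e; rewrite vc'; have := ltn_ord c; have := c_pos; lia.
- by rewrite vc'; have := ltn_ord c; have := c_pos; lia.
Qed.

Notation S := (P :\ x).

Lemma sS : S \subset T_A A'.
Proof.
apply/subsetP => p; rewrite !inE => /andP[px pP].
have /TP[p1 p2 p12] := subsetP sTP p pP.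
have [_ _ hy] := hc; have [n1 n2] := hy p pP px.
by rewrite n1 n2 p1 p2 p12.
Qed.

Lemma chS : chain S.
Proof. by move=> u v; rewrite !inE => /andP[_ uP] /andP[_ vP]; apply: chP. Qed.

Lemma cardP : #|P| = m.
Proof.
apply/eqP; rewrite eqn_leq; have := chain_card sTP chP; rewrite (cardA hA) => ->.
by have := full_card fullP; rewrite (cardA hA).
Qed.

Lemma cardS : #|S| = m.-1.
Proof. by have := cardsD1 x P; rewrite xP cardP; have := m_pos; rlia. Qed.

Lemma missing : exists2 l, l < m & forall p, p \in S -> lv A' p != l.
Proof.
case: (boolP [forall l : 'I_m, [exists p in S, lv A' p == l]]) => hf.
  exfalso; have := @full_card _ A' S; rewrite cardA' cardS.
  have := m_pos; move=> mp h; have : m <= m.-1.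
    apply: h => l lm; have /existsP[p /andP[pS /eqP e]] := forallP hf (Ordinal lm).
    by exists p.
  by lia.
have [l hl] : exists l : 'I_m, ~~ [exists p in S, lv A' p == l].
  by move: hf; rewrite negb_forall => /existsP.
exists l => // p pS; apply/negP => /eqP e; move/negP: hl; apply.
by apply/existsP; exists p; rewrite pS e eqxx.
Qed.

Lemma xnT' : x \notin T_A A'.
Proof.
apply/negP => /TP[h1 h2 _]; have [_ hx _] := hc.
by case: hx => e; move: cA'; rewrite -e ?h1 ?h2.
Qed.

Lemma notTA2 v : v \in T_A A' -> (forall p, p \in S -> nest v p) -> v \notin S -> v \notin T_A A.
Proof.
move=> vT' hn vS; apply/negP => vT.
have vP : v \in P.
  by case: hiso => h _; apply: h => // p pP px; apply: hn; rewrite !inE px.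
have vx : v = x by move: vS; rewrite !inE vP andbT negbK => /eqP.
by move: xnT'; rewrite -vx vT'.
Qed.

Lemma hasc' v : v \in T_A A' -> v \notin T_A A -> v.1 = c' \/ v.2 = c'.
Proof.
move=> /TP[h1 h2 h12]; rewrite inE h12 andbT.
move: h1 h2; rewrite !inA' => /orP[/andP[_ ->]|/eqP ->] /orP[/andP[_ ->]|/eqP ->] //=;
  by [right | left | left].
Qed.


Lemma PV' p : p \in P -> vertexV p.
Proof. exact: (PV hA fP). Qed.

Lemma iso_q : exists q, qprops P x A' q.
Proof.
have [l lm hl] := missing.
have [q [qT' lq nq]] := extend sS chS (ltac:(by rewrite cardA') : l < #|A'|) hl.
have qS : q \notin S by apply/negP => qS; move: (hl q qS); rewrite lq eqxx.
have qnT : q \notin T_A A := notTA2 qT' nq qS.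
have c'B := c'A'.
have uq : forall v, v \in T_A A' -> (forall p, p \in S -> nest v p) -> v \notin S -> v = q.
  move=> v vT hv vS.
  pose S' := q |: S.
  have sS' : S' \subset T_A A' by rewrite subUset sub1set qT' sS.
  have chS' : chain S'.
    move=> u w; rewrite !inE => /orP[/eqP ->|uS] /orP[/eqP ->|wS].
    - exact: nest_refl.
    - by apply: nq; rewrite !inE.
    - by rewrite nestC; apply: nq; rewrite !inE.
    - by apply: chS; rewrite !inE.
  have cS' : #|S'| = m by rewrite cardsU1 qS cardS; have := m_pos; lia.
  have fullS' := chain_full sS' chS' (ltac:(by rewrite cardA' cS') : #|A'| <= #|S'|).
  have lv_v : lv A' v = l.
    apply/eqP/negP => /negP ne.
    have [p pS' lp] := fullS' (lv A' v) (lv_lt vT).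
    move: pS'; rewrite in_setU1 => /orP[/eqP pq|pS].
      by move: ne; rewrite -lp pq lq eqxx.
    have pT := subsetP sS p pS.
    have e := nest_lv_eq vT pT (hv p pS) (esym lp).
    by move: vS; rewrite e pS.
  have vnT := notTA2 vT hv vS.
  case: (eqVneq v q) => [//|vq]; exfalso.
  have nvq : ~~ nest v q.
    by apply: contra vq => h; apply/eqP; apply: nest_lv_eq vT qT' h _; rewrite lv_v lq.
  have rc : forall u, u \in T_A A' -> u.1 = c' \/ u.2 = c' ->
      rk A' u.1 = rk A' c' \/ rk A' u.2 = rk A' c'.
    by move=> u _ [->|->]; [left | right].
  have hv' := rc v vT (hasc' vT vnT); have hq' := rc q qT' (hasc' qT' qnT).
  have ev := lvE vT; have eq := lvE qT'.
  have nr : ~~ (((rk A' v.1 <= rk A' q.1) && (rk A' q.2 <= rk A' v.2)) ||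
               ((rk A' q.1 <= rk A' v.1) && (rk A' v.2 <= rk A' q.2))).
    by rewrite -(rnest vT qT').
  case: (posnP l) => [l0|lpos].
    move/negP: vq; apply; apply/eqP; apply: (Teq vT qT'); last by rewrite lv_v lq.
    by move: hv' hq' ev eq lv_v lq l0 nr; rlia.
  have [p' p'S' lp'] := fullS' l.-1 ltac:(rewrite cardA'; move: lm; clear_all; lia).
  have p'S : p' \in S.
    move: p'S'; rewrite in_setU1 => /orP[/eqP pq|] //.
    by move: lp'; rewrite pq lq; move: lpos; clear_all; lia.
  have p'T := subsetP sS p' p'S.
  have hn1 := hv p' p'S; have hn2 := nq p' p'S.
  rewrite (rnest vT p'T) in hn1; rewrite (rnest qT' p'T) in hn2.
  have ep := lvE p'T.
  have r1 : rk A' p'.1 = rk A' c'.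
    by move: hv' hq' ev eq ep lv_v lq lp' lpos nr hn1 hn2 (rT vT) (rT qT') (rT p'T); rlia.
  have /TP[p1 _ _] := p'T.
  have e1 := rk_inj p1 c'B r1.
  have /TP[p1A _ _] := subsetP sTP p' (subsetP (subD1set P x) p' p'S).
  by move: c'A; rewrite -e1 p1A.
exists q; split => //.
- by apply: contra qnT; apply: (subsetP sTP).
- have qV := T_vertex posA' sfA' qT'; split => //; left.
  have [_ hx _] := hc.
  exact: (Ksum (PV' xP) qV hx (hasc' qT' qnT) cc').
- move=> p pP px; have pS : p \in S by rewrite !inE px.
  apply: (nest_compat sfA') => //; first exact: (subsetP sS).
  by rewrite nestC; apply: nq.
move=> v vV vS hcv.
have hn : forall p, p \in S -> nest v p.
  move=> p; rewrite !inE => /andP[px pP].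
  by rewrite nestC; apply: compat_nest (PV' pP) vV (hcv p pP px).
case: (boolP (v \in T_A A)) => vT.
  left; have vP : v \in P.
    by case: hiso => h _; apply: h => // p pP px; apply: hn; rewrite !inE px.
  by move: vS; rewrite !inE vP andbT negbK => /eqP.
right; apply: uq => //.
have hd : forall d, (v.1 = d \/ v.2 = d) -> d \notin A -> d = c'.
  move=> d hvd dA; have [e [eA de he]] := outside_coord hA fP xP vV hcv hvd dA.
  have ec := ISO_index_unique hiso he hc.
  apply: ord_inj; rewrite vc'; move: de; rewrite ec; clear_all; lia.
have v12 : v.1 <= v.2 by move: vV => /andP[/andP[_ ->] _].
have nb : ~~ ((v.1 \in A) && (v.2 \in A)) by move: vT; rewrite inE v12 andbT.
have nad : v.1 + v.2 != (2 * m).+1 by move: vV => /andP[_].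
have m1 : v.1 \in A'.
  rewrite inA'; case v1A: (v.1 \in A).
    have v2A : v.2 \notin A by move: nb; rewrite v1A.
    have e2 := hd v.2 (or_intror erefl) v2A.
    rewrite andbT; apply/orP; left; apply/eqP => e1.
    by move: nad; rewrite e1 e2 cc' eqxx.
  by rewrite (hd v.1 (or_introl erefl) (negbT v1A)) eqxx orbT.
have m2 : v.2 \in A'.
  rewrite inA'; case v2A: (v.2 \in A).
    have v1A : v.1 \notin A by move: nb; rewrite v2A andbT.
    have e1 := hd v.1 (or_introl erefl) v1A.
    rewrite andbT; apply/orP; left; apply/eqP => e2.
    by move: nad; rewrite e1 e2 addnC cc' eqxx.
  by rewrite (hd v.2 (or_intror erefl) (negbT v2A)) eqxx orbT.
by rewrite inE m1 m2 v12.
Qed.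

Lemma S_faceA' : DeltaA A' S.
Proof.
split; last exact: sS.
by apply: (Delta'_sub (proj1 (proj1 fP))); apply: subD1set.
Qed.
End Iso.

Lemma hstepP n (A : {set 'I_n.+1}) (u v : pt n) : hstep A u v -> v.1 = u.1 /\ v.2 < u.2.
Proof. by case/andP => /eqP -> /and4P[_ _ h _]. Qed.
Lemma vstepP n (A : {set 'I_n.+1}) (u v : pt n) : vstep A u v -> v.2 = u.2 /\ u.1 < v.1.
Proof. by case/andP => /eqP -> /and4P[_ _ h _]. Qed.

Lemma turn_noindex n (A : {set 'I_n.+1}) (P : {set pt n}) x c :
  is_turn A P x -> ~ has_index A P x c.
Proof.
case=> s [hp hP [k [ks hx ht]]] [cA hc hy].
have inP : forall j, j < size s -> nth (pt0 n) s j \in P.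
  by move=> j hj; rewrite -hP inE mem_nth.
have bad : forall y, y \in P -> y != x -> y.1 = c \/ y.2 = c -> False.
  by move=> y yP yx [] e; have [h1 h2] := hy y yP yx; move: h1 h2; rewrite e eqxx.
have diag : k.+1 = size s -> x.1 = x.2.
  case: s hp ks hx {ht inP hP} => [//|p0 s'] hp ks hx /= [ek].
  move: hp => /= /and5P[_ _ _ _ /and3P[_ _ /eqP hl]].
  have := nth_last (pt0 n) (p0 :: s'); rewrite /= -ek hx => ->; exact: hl.
have kpos : 0 < k by case/orP: ht => /andP[].
have prP := inP k.-1 ltac:(move: ks kpos; clear_all; lia).
have nxP : k.+1 < size s -> nth (pt0 n) s k.+1 \in P by move=> h; apply: inP.
case/orP: ht => /and3P[_ hpr hnx].
  have [e1 e2] := hstepP hpr; rewrite hx in e1 e2.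
  have prx : nth (pt0 n) s k.-1 != x by apply/eqP => e; move: e2; rewrite e ltnn.
  case: hc => ec.
    by apply: (bad _ prP prx); left; rewrite -e1.
  case/orP: hnx => [/eqP hl|/andP[hl hv]].
    by apply: (bad _ prP prx); left; rewrite -e1 (diag hl).
  have [f1 f2] := vstepP hv; rewrite hx in f1 f2.
  have nx : nth (pt0 n) s k.+1 != x by apply/eqP => e; move: f2; rewrite e ltnn.
  by apply: (bad _ (nxP hl) nx); right; rewrite f1.
have [e1 e2] := vstepP hpr; rewrite hx in e1 e2.
have prx : nth (pt0 n) s k.-1 != x by apply/eqP => e; move: e2; rewrite e ltnn.
case: hc => ec; last by apply: (bad _ prP prx); right; rewrite -e1.
case/orP: hnx => [/eqP hl|/andP[hl hv]].
  by apply: (bad _ prP prx); right; rewrite -e1 -(diag hl).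
have [f1 f2] := hstepP hv; rewrite hx in f1 f2.
have nx : nth (pt0 n) s k.+1 != x by apply/eqP => e; move: f2; rewrite e ltnn.
by apply: (bad _ (nxP hl) nx); left; rewrite f1.
Qed.

Lemma pack m (P : {set pt (2 * m)}) x Bq q : facet (@Delta' (2 * m)) P -> x \in P ->
  qprops P x Bq q ->
  [/\ QQ P x q != P, Delta' (QQ P x q),
      (forall G, Delta' G -> P :\ x \subset G -> G \subset P \/ G \subset QQ P x q),
      (forall G, Delta' G -> QQ P x q \subset G -> G = QQ P x q) &
      forall F, (facet (@Delta' (2 * m)) F /\ P :\ x \subset F) <-> (F = P \/ F = QQ P x q)].
Proof.
move=> fD xP [qT qP [qV xq] cq hC]; split.
- exact: QQ_neq qP.
- exact: QQ_face fD qV cq.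
- by move=> G; apply: (sub_PQ xP qP xq hC).
- by move=> G; apply: (QQ_max xP qP xq hC).
- by move=> F; apply: (facets_iff fD xP qP qV xq cq hC).
Qed.

Theorem lemma5p2 (m : nat) (A : {set 'I_(2 * m).+1})
  (P : {set pt (2 * m)}) (x : pt (2 * m)) :
  in_calA A -> facet (@Delta' (2 * m)) P -> facet (DeltaA A) P -> x \in P ->
  (exists Q, Q != P /\
     forall F, (facet (@Delta' (2 * m)) F /\ P :\ x \subset F) <-> (F = P \/ F = Q)) /\
  (is_turn A P x ->
     exists Q, [/\ facet (DeltaA A) Q, Q != P, P :\ x \subset Q,
       (forall Q', facet (DeltaA A) Q' -> Q' != P -> P :\ x \subset Q' -> Q' = Q) &
       forall F, (facet (@Delta' (2 * m)) F /\ P :\ x \subset F) <-> (F = P \/ F = Q)]) /\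
  (forall i, is_isolated A P x -> has_index A P x i ->
     DeltaA (swapA A i) (P :\ x) /\
     exists Q, [/\ facet (DeltaA (swapA A i)) Q, Q != P, P :\ x \subset Q,
       (forall Q', facet (DeltaA (swapA A i)) Q' -> P :\ x \subset Q' -> Q' = Q) &
       forall F, (facet (@Delta' (2 * m)) F /\ P :\ x \subset F) <-> (F = P \/ F = Q)]).
Proof.
move=> hA fD fP xP.
have [sTP chP] := facetA_chain fP.
have fullP := facetA_full (posA hA) (sfA hA) fP.
have hsh := shape sTP chP fullP xP.
have sPx : P :\ x \subset P := subD1set P x.
split.
  have [Bq [q hq]] : exists Bq q, qprops P x Bq q.
    case: hsh => [ht|hi].
      by have [q hq] := turn_q hA fP xP ht; exists A, q.
    have [_ [c [hc _]]] := hi.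
    by have [q hq] := iso_q hA fP xP hc hi; exists (A' A c), q.
  have [h1 _ _ _ h5] := pack fD xP hq.
  by exists (QQ P x q).
split.
  move=> ht.
  have hT : TURN A P x.
    case: hsh => // [[_ [c [hc _]]]]; exfalso; exact: (turn_noindex ht hc).
  have [q hq] := turn_q hA fP xP hT.
  have [h1 h2 h3 h4 h5] := pack fD xP hq.
  have [qT _ _ _ _] := hq.
  have QA : DeltaA A (QQ P x q).
    split => //; rewrite subUset sub1set qT /=; exact: subset_trans sPx sTP.
  exists (QQ P x q); split => //.
  - by split => // G [hG _]; apply: h4.
  - exact: subsetUr.
  - move=> Q' fQ' nQ' sQ'.
    case: (h3 Q' (proj1 (proj1 fQ')) sQ') => s.
      by move: nQ'; rewrite (facet_sub fQ' (proj1 fP) s) eqxx.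
    by symmetry; apply: facet_sub fQ' QA s.
move=> c _ hc.
have hI : ISO A P x.
  by case: hsh => // hT; exfalso; exact: (TURN_noindex hT hc).
split; first by move: (S_faceA' fP hc); rewrite /A'.
have [q hq] := iso_q hA fP xP hc hI.
have [h1 h2 h3 h4 h5] := pack fD xP hq.
have [qT _ _ _ _] := hq.
have QA : DeltaA (swapA A c) (QQ P x q).
  by split => //; rewrite subUset sub1set qT /=; exact: (sS fP hc).
exists (QQ P x q); split => //.
- by split => // G [hG _]; apply: h4.
- exact: subsetUr.
move=> Q' fQ' sQ'.
have sQ : Q' \subset QQ P x q.
  case: (h3 Q' (proj1 (proj1 fQ')) sQ') => // s.
  apply/subsetP => y yQ; rewrite /QQ in_setU1; apply/orP; right.
  rewrite in_setD1 (subsetP s y yQ) andbT.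
  apply: contraNneq (xnT' hA fP xP hc) => e.
  by rewrite -e; apply: (subsetP (proj2 (proj1 fQ'))).
by symmetry; apply: facet_sub fQ' QA sQ.
Qed.
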